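(* Consider the partial-block protocol described in the context, on a finite set of agents $A$ with a connected undirected connectivity graph $G=(A,E)$ and block length $L$. If at some epoch $t$ a deadlock occurs, i.e. $D(i)$ holds for every $i\in A$, then all partial blocks have the same size: $|pb_i^{(t)}|=|pb_j^{(t)}|$ for all $i,j\in A$.
   Context: Let $A$ be a finite set of agents (agent IDs) and $G=(A,E)$ a connected undirected graph; $\Gamma_i$ denotes the set of neighbors of $i$. Fix an integer $L\ge 1$ (block length). Each agent $i$ maintains a partial block $pb_i\subseteq A$ (a set of agent IDs). The system runs in epochs $t=0,1,2,\dots$; $pb_i^{(t)}$ is agent $i$'s partial block at the start of epoch $t$. In each epoch: (C1) every agent $i$ with $i\notin pb_i$ adds $i$ to $pb_i$; (C2) every agent $i$ sends its $pb_i$ to every neighbor $j\in\Gamma_i$. When an agent $i$ receives a partial block $P$ (from a neighbor or via a direct message) it applies the rule: (R1) if $|P\setminus\{i\}|>|pb_i\setminus\{i\}|$, agent $i$ sets $pb_i:=P$; (R2) otherwise, if $|P\setminus\{i\}|=|pb_i\setminus\{i\}|$ and $P\neq pb_i$, agent $i$ sends its current $pb_i$ directly to every agent in $P\setminus pb_i$, each of which processes it by the same rule; (R3) otherwise the received block is discarded. All received partial blocks are assumed to pass all validity and similarity checks. For an agent $i$ and epoch $t$, the predicate $D(i)$ means: $pb_i^{(t)}=pb_i^{(t+1)}$ and $|pb_i^{(t)}|<L$. A deadlock at epoch $t$ means that $D(i)$ holds for all $i\in A$. *)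

(* Defs.v *)
From mathcomp Require Import all_boot.
From mathcomp Require Import ssreflect ssrbool ssrnat eqtype seq fintype finset finfun fingraph.
Set Implicit Arguments. Unset Strict Implicit. Unset Printing Implicit Defensive.

Section Protocol.
Variable A : finType.
Variable E : rel A.

Definition Gamma (i : A) : {set A} := [set j | E i j].

(* a message in transit: (recipient, partial block, is_neighbour_broadcast);
   the boolean is true for messages sent in step (C2), false for direct
   messages sent by rule (R2). *)
Definition msg := (A * {set A} * bool)%type.

Definition upd (pb : {ffun A -> {set A}}) (i : A) (v : {set A}) :
  {ffun A -> {set A}} := [ffun k => if k == i then v else pb k].

(* global state during an epoch: partial blocks, pending messages, and
   per-agent progress in the epoch (0: nothing done, 1: did C1, 2: did C2) *)
Record state := St { st_pb : {ffun A -> {set A}};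
                     st_q : seq msg;
                     st_ph : {ffun A -> nat} }.

Definition updn (ph : {ffun A -> nat}) (i : A) (n : nat) : {ffun A -> nat} :=
  [ffun k => if k == i then n else ph k].

(* processing of a received partial block P by agent i: rules R1, R2, R3.
   Returns the new partial-block map and the newly sent direct messages. *)
Definition receive (pb : {ffun A -> {set A}}) (i : A) (P : {set A}) :
  {ffun A -> {set A}} * seq msg :=
  if #|P :\ i| > #|pb i :\ i| then (upd pb i P, [::])
  else if (#|P :\ i| == #|pb i :\ i|) && (P != pb i) then
    (pb, [seq (k, pb i, false) | k <- enum (P :\: pb i)])
  else (pb, [::]).

Inductive step : state -> state -> Prop :=
| StepC1 (pb : {ffun A -> {set A}}) (q : seq msg) (ph : {ffun A -> nat}) (i : A) : ph i = 0 ->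
    step (St pb q ph)
         (St (if i \notin pb i then upd pb i (i |: pb i) else pb) q (updn ph i 1))
| StepC2 (pb : {ffun A -> {set A}}) (q : seq msg) (ph : {ffun A -> nat}) (i : A) : ph i = 1 ->
    step (St pb q ph)
         (St pb (q ++ [seq (j, pb i, true) | j <- enum (Gamma i)]) (updn ph i 2))
| StepRecv (pb : {ffun A -> {set A}}) (ph : {ffun A -> nat}) (q1 q2 : seq msg)
    (i : A) (P : {set A}) (b : bool) :
    step (St pb (q1 ++ (i, P, b) :: q2) ph)
         (St (receive pb i P).1 (q1 ++ q2 ++ (receive pb i P).2) ph).

Inductive steps : state -> state -> Prop :=
| StepsRefl s : steps s s
| StepsCons s1 s2 s3 : step s1 s2 -> steps s2 s3 -> steps s1 s3.

(* One epoch, taking partial blocks pb0 (start of epoch t) to pb1 (start of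
   epoch t+1): an arbitrary interleaving in which every agent performs C1
   then C2 exactly once, and message deliveries happen in arbitrary order;
   every block broadcast in C2 during the epoch is received within the epoch
   (no broadcast message is pending at the end).  Direct messages may be
   pending at the start (q0) or end (q1) of the epoch. *)
Definition epoch (pb0 : {ffun A -> {set A}}) (q0 : seq msg)
                 (pb1 : {ffun A -> {set A}}) (q1 : seq msg) : Prop :=
  steps (St pb0 q0 [ffun => 0]) (St pb1 q1 [ffun => 2]) /\
  all (fun m : msg => ~~ m.2) q1.

Definition D (L : nat) (pb0 pb1 : {ffun A -> {set A}}) (i : A) : Prop :=
  pb0 i = pb1 i /\ #|pb0 i| < L.

End Protocol.

(* Main.v *)
Require Import Defs.
From mathcomp Require Import all_boot zify.
Set Implicit Arguments. Unset Strict Implicit. Unset Printing Implicit Defensive.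

Section Proof.
Variables (A : finType) (E : rel A) (pb0 : {ffun A -> {set A}}).

Definition cc (k : A) := #|pb0 k :\ k|.
Definition Mono (s : state A) := forall k, cc k <= #|st_pb s k :\ k|.
Definition Bad (s : state A) := exists k, cc k < #|st_pb s k :\ k|.
Definition G2 (s : state A) := forall k, 0 < st_ph s k -> k \in st_pb s k.
Definition G3 (s : state A) := forall i j, E i j -> st_ph s i = 2 ->
  cc i <= cc j \/ exists P, ((j, P, true) \in st_q s) && (cc i <= #|P :\ j|).
Definition Inv s := Mono s /\ (Bad s \/ (G2 s /\ G3 s)).

Lemma notBad s : Mono s -> ~ Bad s -> forall k, #|st_pb s k :\ k| = cc k.
Proof.
move=> M nB k; apply/eqP; rewrite eqn_leq M andbT leqNgt; apply/negP => h.
by apply: nB; exists k.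
Qed.

Lemma Bad_dec s : Bad s \/ ~ Bad s.
Proof.
case: (pickP (fun k => cc k < #|st_pb s k :\ k|)) => [k hk|hn]; first by left; exists k.
by right; case=> k hk; move: (hn k) => /= ; rewrite hk.
Qed.

Lemma step_inv s s' : irreflexive E -> step E s s' -> Inv s -> Inv s'.
Proof.
move=> irr st [M H]; case: st M H.
- move=> pb q ph i ph0 /= M H.
  set pb' := (if _ then _ else _).
  have fD : forall k, pb' k :\ k = pb k :\ k.
    move=> k; rewrite /pb'; case: ifP => // _; rewrite ffunE.
    case: eqP => [->|//]; apply/setP => x; rewrite !inE.
    by case: eqP.
  have fo : forall k, k != i -> pb' k = pb k.
    by move=> k nk; rewrite /pb'; case: ifP => // _; rewrite ffunE (negbTE nk).
  have fi : i \in pb' i.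
    rewrite /pb'; case: ifP; last by move/negbFE.
    by move=> _; rewrite ffunE eqxx setU11.
  split; first by move=> k /=; rewrite fD.
  case: H => [[k Hk]|[g2 g3]]; first by left; exists k => /=; rewrite fD.
  right; split.
  + move=> k /=; rewrite /updn ffunE; case: eqP => [->|/eqP nk] // ?.
    by rewrite fo //; apply: g2.
  + move=> i' j e /=; rewrite /updn ffunE; case: eqP => // _ h.
    exact: g3.
- move=> pb q ph i ph1 /= M H; split => //.
  case: H => [B|[g2 g3]]; first by left.
  have [hb|nB] := Bad_dec (St pb q ph); first by left.
  right; split.
  + move=> k /=; rewrite /updn ffunE; case: eqP => [->|_] hh; first by apply: g2; rewrite /= ph1.
    exact: g2 hh.
  + move=> i' j e /=; rewrite /updn ffunE; case: (i' =P i) => [ei|_] h; last first.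
      case: (g3 i' j e h) => [|[P /andP[hP hc]]]; first by left.
      by right; exists P; rewrite mem_cat hP hc.
    subst i'; right; exists (pb i); apply/andP; split.
      rewrite mem_cat; apply/orP; right; apply/mapP; exists j => //.
      by rewrite mem_enum /Gamma inE.
    have iin : i \in pb i by apply: g2; rewrite /= ph1.
    have ji : j != i by apply/eqP => ji; subst j; move: (irr i); rewrite e.
    have := notBad M nB i => /= <-.
    have := cardsD1 i (pb i); have := cardsD1 j (pb i).
    rewrite iin; case: (j \in pb i) => /=; lia.
- move=> pb ph q1 q2 i P b /= M H.
  have [[e1 lt]|[e1 le]] : ((receive pb i P).1 = upd pb i P /\ #|pb i :\ i| < #|P :\ i|) \/
       ((receive pb i P).1 = pb /\ #|P :\ i| <= #|pb i :\ i|).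
    rewrite /receive; case: ltnP => h; first by left.
    by right; case: ifP.
  + rewrite e1; split.
      move=> k /=; rewrite ffunE; case: eqP => [->|_]; last exact: M.
      by apply: leq_trans (ltnW lt); apply: M.
    left; exists i => /=; rewrite ffunE eqxx.
    by apply: leq_trans lt; apply: M.
  + rewrite e1; split => //.
    case: H => [B|[g2 g3]]; first by left.
    have [hb|nB] := Bad_dec (St pb (q1 ++ (i, P, b) :: q2) ph); first by left.
    right; split => //.
    move=> i' j e h /=.
    case: (g3 i' j e h) => [|[P0 /andP[hP hc]]]; first by left.
    move: hP; rewrite /= !mem_cat in_cons.
    case: (boolP ((j, P0, true) == (i, P, b))) => [/eqP[ej eP eb]|_] /=.
      left; subst j P0.
      have := notBad M nB i => /= eq.
      by rewrite -eq; apply: leq_trans hc le.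
    move=> hq; right; exists P0; rewrite hc andbT !mem_cat.
    by case/orP: hq => -> //; rewrite !orbT.
Qed.

Lemma steps_inv s s' : irreflexive E -> steps E s s' -> Inv s -> Inv s'.
Proof.
move=> irr; elim=> // s1 s2 s3 st _ IH h; apply: IH; exact: step_inv st h.
Qed.

End Proof.

Theorem lemma3 (A : finType) (E : rel A) (L : nat)
    (pb0 pb1 : {ffun A -> {set A}}) (q0 q1 : seq (msg A)) :
  symmetric E -> irreflexive E -> (forall i j : A, connect E i j) ->
  0 < L ->
  epoch E pb0 q0 pb1 q1 ->
  (forall i : A, D L pb0 pb1 i) ->
  forall i j : A, #|pb0 i| = #|pb0 j|.
Proof.
move=> _ irr conn _ [st allq] HD.
have I0 : Inv E pb0 (St pb0 q0 [ffun => 0]).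
  split; first by move=> k.
  by right; split => [k|i j _] /=; rewrite ffunE.
have [M H] := steps_inv irr st I0.
have eq1 : forall k, pb1 k = pb0 k by move=> k; case: (HD k).
have nB : ~ Bad pb0 (St pb1 q1 [ffun => 2]).
  by case=> k /=; rewrite eq1 ltnn.
case: H => [//|[g2 g3]].
have edge : forall i j, E i j -> cc pb0 i <= cc pb0 j.
  move=> i j e; case: (g3 i j e) => /=; first by rewrite ffunE.
    by [].
  case=> P /andP[hP _]; move/allP: allq => /(_ _ hP) /=; by [].
have le : forall i j, cc pb0 i <= cc pb0 j.
  move=> i j; case/connectP: (conn i j) => p.
  elim: p i => [|x p IH] i /=; first by move=> _ ->.
  by case/andP=> e pp ej; apply: leq_trans (edge _ _ e) (IH _ pp ej).
have sz : forall k, #|pb0 k| = (cc pb0 k).+1.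
  move=> k; have kin : k \in pb0 k by rewrite -eq1; apply: g2; rewrite /= ffunE.
  by rewrite (cardsD1 k) kin.
move=> i j; rewrite !sz; congr S; apply/eqP; by rewrite eqn_leq !le.
Qed.
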